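(* Let $c$ be a non-constant clause on the variables $x_1,\dots,x_n$, and let $a\in[-1,1]^n$. If $\mathrm{FE}_c(a)=-1$, then $a$ is a feasible solution of $\mathrm{FE}_c$.
   Context: Boolean values are encoded as $\pm1$, with $-1$ standing for True. A clause is a CNF, cardinality, XOR or NAE constraint, regarded as a function $\{\pm1\}^n\to\{\pm1\}$ with value $-1$ exactly when it is satisfied. A clause is non-constant if it is equivalent neither to True nor to False. $\mathrm{FE}_c$ is the Fourier expansion of $c$, i.e. the unique multilinear polynomial agreeing with $c$ on $\{\pm1\}^n$. For a multilinear polynomial $F$ on $[-1,1]^n$, a set $J\subseteq[n]$ and a vector $z$, $F_{J\gets z}$ denotes the polynomial obtained by fixing the coordinates in $J$ to the values $z$. Feasibility: for $a\in[-1,1]^n$, let $I=\{i: a_i\in\{\pm1\}\}$ and let $a_I$ be the restriction of $a$ to the coordinates in $I$. Then $a$ is a feasible solution of $F$ if $F_{I\gets a_I}$ is a constant polynomial. *)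

(* Defs.v *)
From HB Require Import structures.
From mathcomp Require Import all_boot all_order all_algebra.
From mathcomp Require Import reals.
Set Implicit Arguments. Unset Strict Implicit. Unset Printing Implicit Defensive.
Import Order.TTheory GRing.Theory Num.Theory.
Local Open Scope ring_scope.

(** Boolean assignments: [b : {ffun 'I_n -> bool}], [b i = true] means x_i is True.
    In the +-1 encoding True is -1 and False is +1. *)
Definition pm1 {R : ringType} (t : bool) : R := if t then -1 else 1.

(** A literal is a variable index together with a flag [true] = negated. *)
Definition lit_val n (b : {ffun 'I_n -> bool}) (l : 'I_n * bool) : bool :=
  b l.1 (+) l.2.

Inductive clause_kind := CNF | CardGE of nat | CardLE of nat | XOR | NAE.

Record clause (n : nat) := Clause {
  ckind : clause_kind;
  clits : seq ('I_n * bool) }.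

Definition sat n (c : clause n) (b : {ffun 'I_n -> bool}) : bool :=
  let vs := [seq lit_val b l | l <- clits c] in
  match ckind c with
  | CNF => has id vs
  | CardGE k => k <= count id vs
  | CardLE k => count id vs <= k
  | XOR => odd (count id vs)
  | NAE => has id vs && has negb vs
  end%N.

Definition clause_fun {R : ringType} n (c : clause n) (b : {ffun 'I_n -> bool}) : R :=
  pm1 (sat c b).

Definition nonconstant n (c : clause n) : Prop :=
  (exists b, sat c b) /\ (exists b, ~~ sat c b).

(** Multilinear polynomials in n variables over R: coefficient of the monomial
    prod_{i in S} x_i for each S subset of [n]. *)
Definition mlpoly (R : Type) (n : nat) := {set 'I_n} -> R.

Definition mleval {R : ringType} n (F : mlpoly R n) (a : 'I_n -> R) : R :=
  \sum_(S : {set 'I_n}) F S * \prod_(i in S) a i.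

Definition FE {R : fieldType} n (c : clause n) : mlpoly R n :=
  fun S => (2%:R ^+ n)^-1 *
    \sum_(b : {ffun 'I_n -> bool}) clause_fun c b * \prod_(i in S) pm1 (b i).

(** F_{J <- z}: fix the variables in J to the values z; the result is a
    multilinear polynomial in the remaining variables (coefficients on monomials
    meeting J are 0). *)
Definition restrict {R : ringType} n (F : mlpoly R n) (J : {set 'I_n})
  (z : 'I_n -> R) : mlpoly R n :=
  fun T => if T \subset ~: J then
             \sum_(S : {set 'I_n} | S :\: J == T) F S * \prod_(i in S :&: J) z i
           else 0.

Definition constant_poly {R : ringType} n (F : mlpoly R n) : Prop :=
  forall T : {set 'I_n}, T != set0 -> F T = 0.

Definition feasible {R : ringType} n (F : mlpoly R n) (a : 'I_n -> R) : Prop :=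
  let I := [set i | (a i == 1) || (a i == -1)] in
  constant_poly (restrict F I a).

(* Main.v *)
Require Import Defs.
From HB Require Import structures.
From mathcomp Require Import all_boot all_order all_algebra.
From mathcomp Require Import reals.
Import Order.TTheory GRing.Theory Num.Theory.
Local Open Scope ring_scope.
Lemma sum_sets (R : realType) n (g : 'I_n -> bool -> R) :
  \sum_(S : {set 'I_n}) \prod_i g i (i \in S) = \prod_i (g i true + g i false).
Proof.
have := @bigA_distr R 0 1 *%R +%R _ (fun i => g i true) (fun i => g i false).
move=> /= ->.
apply: eq_big.
  by move=> S; rewrite inE.
move=> S _. apply: eq_bigr => i _; by case: (i \in S).
Qed.
Lemma sum_ffun (R : realType) n (g : 'I_n -> bool -> R) :
  \sum_(b : {ffun 'I_n -> bool}) \prod_i g i (b i) = \prod_i (g i true + g i false).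
Proof.
rewrite -bigA_distr_bigA; apply: eq_bigr => i _; by rewrite big_bool.
Qed.

Lemma mleval_FE (R : realType) n (c : clause n) (a : 'I_n -> R) :
  mleval (FE c) a = (2%:R ^+ n)^-1 *
     \sum_b clause_fun c b * \prod_i (pm1 (b i) * a i + 1).
Proof.
rewrite /mleval /FE.
under eq_bigr => S _ do rewrite -mulrA big_distrl /=.
rewrite -big_distrr /=; congr (_ * _).
rewrite exchange_big /=; apply: eq_bigr => b _.
under eq_bigr => S _ do rewrite -mulrA.
rewrite -big_distrr /=; congr (_ * _).
rewrite -(@sum_sets R n (fun i x => if x then pm1 (b i) * a i else 1)).
apply: eq_bigr => S _.
by rewrite -big_split /= big_mkcond; apply: eq_bigr => i _; case: (i \in S); rewrite ?mulr1.
Qed.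

Lemma restrict_FE (R : realType) n (c : clause n) (I T : {set 'I_n}) (a : 'I_n -> R) :
  T \subset ~: I ->
  restrict (FE c) I a T = (2%:R ^+ n)^-1 * \sum_b clause_fun c b *
     \prod_i (if i \in I then pm1 (b i) * a i + 1 else if i \in T then pm1 (b i) else 1).
Proof.
move=> HT; rewrite /restrict HT /FE.
under eq_bigr => S _ do rewrite -mulrA big_distrl /=.
rewrite -big_distrr /=; congr (_ * _).
rewrite exchange_big /=; apply: eq_bigr => b _.
under eq_bigr => S _ do rewrite -mulrA.
rewrite -big_distrr /=; congr (_ * _).
set g := fun i (x : bool) => if i \in I then (if x then pm1 (b i) * a i else 1)
  else if x == (i \in T) then (if x then pm1 (b i) else 1) else 0.
transitivity (\sum_(S : {set 'I_n}) \prod_i g i (i \in S)); last first.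
  rewrite sum_sets; apply: eq_bigr => i _; rewrite /g.
  by case: (i \in I); case: (i \in T) => //=; rewrite ?addr0 ?add0r.
rewrite big_mkcond /=; apply: eq_bigr => S _.
case: eqP => [EST|hne].
  rewrite big_mkcond [\prod_(i in S :&: I) _]big_mkcond -big_split /=; apply: eq_bigr => i _; rewrite /g -EST !inE.
  by case: (i \in I); case: (i \in S) => /=; rewrite ?mulr1 ?mul1r.
have [i Hi]: exists i, (i \notin I) && ((i \in S) != (i \in T)).
  case: (boolP [exists i, (i \notin I) && ((i \in S) != (i \in T))]) => [/existsP //|].
  rewrite negb_exists => /forallP H; exfalso; apply: hne; apply/setP => i; rewrite inE.
  have := H i; rewrite negb_and negbK.
  have hTI : i \in T -> i \notin I by move/(subsetP HT); rewrite inE.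
  case hi: (i \in I) => /=.
    by move=> _; apply/esym/negbTE; apply/negP => /hTI; rewrite hi.
  by move/negPn/eqP.
rewrite (bigD1 i) //= /g; move/andP: Hi => [/negbTE -> /negbTE ->].
by rewrite mul0r.
Qed.

From mathcomp Require Import ring lra.

Lemma pos_fac (R : realType) (x : bool) (y : R) : -1 <= y <= 1 -> 0 <= pm1 x * y + 1.
Proof. by move=> /andP[h1 h2]; case: x; rewrite /pm1; lra. Qed.

Lemma sat_of_W (R : realType) n (c : clause n) (a : 'I_n -> R) :
  (forall i, -1 <= a i <= 1) ->
  mleval (FE c) a = -1 ->
  forall b : {ffun 'I_n -> bool}, \prod_i (pm1 (b i) * a i + 1) != 0 -> sat c b.
Proof.
move=> ha; rewrite mleval_FE => hev b hW.
set W := fun b : {ffun 'I_n -> bool} => \prod_i (pm1 (b i) * a i + 1).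
have sumW : \sum_b W b = 2%:R ^+ n.
  rewrite /W (@sum_ffun R n (fun i x => pm1 x * a i + 1)) (eq_bigr (fun _ => 2%:R)); first by rewrite prodr_const card_ord.
  by move=> i _; rewrite /pm1; ring.
have n0 : (2%:R ^+ n : R) != 0 by rewrite expf_neq0 // pnatr_eq0.
have hX : \sum_b clause_fun c b * W b = - 2%:R ^+ n.
  by move: hev; rewrite -/W => /(congr1 (fun x => 2%:R ^+ n * x)); rewrite mulrA mulfV // mul1r mulrN1.
have hS : \sum_b (clause_fun c b + 1) * W b = 0.
  under eq_bigr do rewrite mulrDl mul1r.
  by rewrite big_split /= hX sumW addNr.
have nn : forall b, true -> 0 <= (clause_fun c b + 1) * W b.
  move=> b' _; apply: mulr_ge0; first by rewrite /clause_fun /pm1; case: sat; lra.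
  by apply: prodr_ge0 => i _; apply: pos_fac.
have := psumr_eq0P nn hS (isT : true) (i := b).
move/eqP; rewrite mulf_eq0 (negbTE hW) orbF /clause_fun /pm1.
by case: sat => //; lra.
Qed.

Theorem lemma4 (R : realType) (n : nat) (c : clause n) (a : 'I_n -> R) :
  nonconstant c ->
  (forall i, -1 <= a i <= 1) ->
  mleval (FE c) a = -1 ->
  feasible (FE c) a.
Proof.
move=> _ ha hev; rewrite /feasible.
set I := [set i | (a i == 1) || (a i == -1)].
move=> T /set0Pn [j jT].
case HT: (T \subset ~: I); last by rewrite /restrict HT.
rewrite restrict_FE //.
set q := fun i (x : bool) => if i \in I then pm1 x * a i + 1 else if i \in T then pm1 x else 1.
have hjI : j \notin I by move/(subsetP HT): jT; rewrite inE.
have step : forall b : {ffun 'I_n -> bool},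
    clause_fun c b * \prod_i q i (b i) = - \prod_i q i (b i).
  move=> b; have [->|hQ] := eqVneq (\prod_i q i (b i)) 0; first by rewrite mulr0 oppr0.
  have hs : sat c b.
    apply: (@sat_of_W R n c a ha hev); apply/prodf_neq0 => i _.
    move/prodf_neq0: hQ => /(_ i isT); rewrite /q.
    case hi: (i \in I) => // _.
    move/negbT: hi; rewrite inE negb_or => /andP [h1 h2].
    have := ha i => /andP [h3 h4].
    have h5 : a i < 1 by rewrite lt_neqAle h1 h4.
    have h6 : -1 < a i by rewrite lt_neqAle eq_sym h2 h3.
    by case: (b i); rewrite /pm1; apply/eqP; lra.
  by rewrite /clause_fun hs /pm1 mulN1r.
rewrite (eq_bigr _ (fun b _ => step b)) sumrN (@sum_ffun R n q).
rewrite (bigD1 j) //= {1 2}/q (negbTE hjI) jT /pm1.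
by rewrite addNr mul0r oppr0 mulr0.
Qed.
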